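(* Let $U$ be a nonempty set, let $f:\{T,F\}^n\to\{T,F\}$ be a Boolean function, and let $\pi_1,\dots,\pi_n$ be partitions of $U$. For $u,u'\in U$ and each $i$, set $v_i(u,u')=T$ if $(u,u')\in\operatorname{dit}(\pi_i)$ and $v_i(u,u')=F$ if $(u,u')\in\operatorname{indit}(\pi_i)$. Let $G$ be the simple undirected graph on $U$ in which distinct $u,u'$ are adjacent iff $f(v_1(u,u'),\dots,v_n(u,u'))=F$, and let $f(\pi_1,\dots,\pi_n)$ denote the partition of $U$ into the connected components of $G$. Let $$S=\bigcup_{\substack{(t_1,\dots,t_n)\in\{T,F\}^n\\ f(t_1,\dots,t_n)=F}}\ \bigcap_{i=1}^n A_i^{t_i},\qquad A_i^{T}=\operatorname{dit}(\pi_i),\ A_i^{F}=\operatorname{indit}(\pi_i),$$ (the set obtained from the disjunctive normal form of $\lnot f$ by replacing each unnegated variable $P_i$ by $\operatorname{dit}(\pi_i)$, each negated variable $\lnot P_i$ by $\operatorname{indit}(\pi_i)$, disjunction by union and conjunction by intersection). Then the equivalence relation $\operatorname{indit}(f(\pi_1,\dots,\pi_n))$ equals the reflexive-symmetric-transitive closure $\overline{S}$ of $S$ in $U\times U$; equivalently, $f(\pi_1,\dots,\pi_n)$ is the set of equivalence classes of $\overline{S}$.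
   Context: A partition of $U$ is a set of pairwise disjoint nonempty subsets of $U$ (blocks) whose union is $U$. For a partition $\pi$, $\operatorname{indit}(\pi)=\{(u,u')\in U\times U: u,u' \text{ lie in the same block of }\pi\}$ and $\operatorname{dit}(\pi)=U\times U\setminus\operatorname{indit}(\pi)$. The reflexive-symmetric-transitive closure $\overline{S}$ of $S\subseteq U\times U$ is the intersection of all equivalence relations on $U$ containing $S$. *)

(* Defs.v *)
From mathcomp Require Import all_boot.
From mathcomp Require Import boolp.
From Stdlib Require Import Relations.

Set Implicit Arguments.
Unset Strict Implicit.
Unset Printing Implicit Defensive.

Definition is_partition (U : Type) (P : (U -> Prop) -> Prop) : Prop :=
  (forall B, P B -> exists u, B u) /\
  (forall B C, P B -> P C -> B <> C -> forall u, ~ (B u /\ C u)) /\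
  (forall u, exists B, P B /\ B u).

Definition indit (U : Type) (P : (U -> Prop) -> Prop) (u u' : U) : Prop :=
  exists B, P B /\ B u /\ B u'.

Definition dit (U : Type) (P : (U -> Prop) -> Prop) (u u' : U) : Prop :=
  ~ indit P u u'.

(* truth value v_i(u,u') : true = T (distinction), false = F *)
Definition vval (U : Type) (n : nat) (pi : 'I_n -> (U -> Prop) -> Prop)
  (u u' : U) : {ffun 'I_n -> bool} :=
  [ffun i => `[< dit (pi i) u u' >]].

Definition adjG (U : Type) (n : nat) (f : {ffun 'I_n -> bool} -> bool)
  (pi : 'I_n -> (U -> Prop) -> Prop) (u u' : U) : Prop :=
  u <> u' /\ f (vval pi u u') = false.

Definition fpart (U : Type) (n : nat) (f : {ffun 'I_n -> bool} -> bool)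
  (pi : 'I_n -> (U -> Prop) -> Prop) : (U -> Prop) -> Prop :=
  fun B => exists u, B = (fun x => clos_refl_trans U (adjG f pi) u x).

Definition Sset (U : Type) (n : nat) (f : {ffun 'I_n -> bool} -> bool)
  (pi : 'I_n -> (U -> Prop) -> Prop) (u u' : U) : Prop :=
  exists t : {ffun 'I_n -> bool}, f t = false /\
    forall i, (if t i then dit (pi i) u u' else indit (pi i) u u').

Definition is_equivalence (U : Type) (R : U -> U -> Prop) : Prop :=
  (forall x, R x x) /\ (forall x y, R x y -> R y x) /\
  (forall x y z, R x y -> R y z -> R x z).

Definition rst_closure (U : Type) (S : U -> U -> Prop) (u u' : U) : Prop :=
  forall R, is_equivalence R -> (forall x y, S x y -> R x y) -> R u u'.

(* Main.v *)
Require Import Defs.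
From mathcomp Require Import all_boot.
From mathcomp Require Import boolp.
From Stdlib Require Import Relations.

Lemma indit_sym (U : Type) (P : (U -> Prop) -> Prop) u u' :
  indit P u u' -> indit P u' u.
Proof. by case=> B [PB [h1 h2]]; exists B. Qed.

Lemma vval_sym (U : Type) n (pi : 'I_n -> (U -> Prop) -> Prop) u u' :
  vval pi u u' = vval pi u' u.
Proof.
apply/ffunP => i; rewrite !ffunE.
apply/asboolP/asboolP => H K; apply: H; exact: indit_sym.
Qed.

Lemma adj_sym (U : Type) n f (pi : 'I_n -> (U -> Prop) -> Prop) u u' :
  adjG f pi u u' -> adjG f pi u' u.
Proof. by case=> h1 h2; split; [move=> e; apply: h1 | rewrite vval_sym]. Qed.

Lemma rst_rt (U : Type) (R : U -> U -> Prop) :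
  (forall x y, R x y -> R y x) ->
  forall x y, clos_refl_sym_trans U R x y ->
  clos_refl_trans U R x y /\ clos_refl_trans U R y x.
Proof.
move=> Rs x y; elim=> {x y}.
- by move=> x y H; split; apply: rt_step; [|apply: Rs].
- by move=> x; split; apply: rt_refl.
- by move=> x y _ [h1 h2]; split.
- move=> x y z _ [a1 a2] _ [b1 b2]; split; apply: rt_trans; eauto.
Qed.

Theorem mainTheorem5 (U : Type) (n : nat) (f : {ffun 'I_n -> bool} -> bool)
  (pi : 'I_n -> (U -> Prop) -> Prop) :
  inhabited U ->
  (forall i, is_partition (pi i)) ->
  forall u u' : U, indit (fpart f pi) u u' <-> rst_closure (Sset f pi) u u'.
Proof.
move=> _ _ u u'.
have adjS : forall x y, adjG f pi x y -> Sset f pi x y.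
  move=> x y [_ h]; exists (vval pi x y); split => // i.
  rewrite ffunE; case: asboolP => // H.
  by apply: contrapT.
have Sadj : forall x y, Sset f pi x y -> clos_refl_sym_trans U (adjG f pi) x y.
  move=> x y [t [ft ht]].
  have E : vval pi x y = t.
    apply/ffunP => i; rewrite ffunE; have := ht i.
    by case: (t i) => H; apply/asboolP => //; apply.
  rewrite -E in ft.
  have [->|nxy] := pselect (x = y); first exact: rst_refl.
  by apply: rst_step; split.
split.
- case=> B [[w ->] [hu hu']] R [Rr [Rs Rt]] RS.
  have key : forall x y, clos_refl_trans U (adjG f pi) x y -> R x y.
    move=> x y; elim => {x y}.
    + by move=> x y /adjS /RS.
    + by [].
    + by move=> x y z _ h1 _ h2; apply: Rt h1 h2.
  by apply: Rt (Rs _ _ (key _ _ hu)) (key _ _ hu').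
- move=> H.
  have : clos_refl_sym_trans U (adjG f pi) u u'.
    apply: H.
    + split; first exact: rst_refl.
      split; first exact: rst_sym.
      exact: rst_trans.
    + exact: Sadj.
  move=> /(@rst_rt U _ (@adj_sym U n f pi) u u') [h _].
  exists (fun x => clos_refl_trans U (adjG f pi) u x); split; first by exists u.
  by split => //; apply: rt_refl.
Qed.
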